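(* Let $(V,g,J)$ be a pseudo-hermitian vector space, $A:V\to V$ a hermitian endomorphism, $p$ a polynomial with real coefficients and $B=p(A)$. Suppose a linear operator $R:\mathfrak{u}(g,J)\to\mathfrak{u}(g,J)$ satisfies $[R(X),A]=[X,B]$ for all $X\in\mathfrak{u}(g,J)$. Then: (1) for any real eigenvalues $\lambda_i\neq\lambda_j$ of $A$, the number $\frac{p(\lambda_i)-p(\lambda_j)}{\lambda_i-\lambda_j}$ is an eigenvalue of $R$; (2) if $A$ has a non-trivial Jordan block with real eigenvalue $\lambda_i$, then $p'(\lambda_i)$ is an eigenvalue of $R$.
   Context: A pseudo-hermitian vector space $(V,g,J)$ is a real vector space with a complex structure $J$ and a non-degenerate inner product $g$ (any signature) with $g(Ju,Jv)=g(u,v)$. An endomorphism is hermitian if it is $g$-selfadjoint and commutes with $J$. $\mathfrak{u}(g,J)=\{X\in\mathfrak{gl}(V):[X,J]=0,\ g(Xu,v)=-g(u,Xv)\}$. *)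

(* Defs.v *)
From HB Require Import structures.
From mathcomp Require Import all_boot all_order all_algebra.
Set Implicit Arguments. Unset Strict Implicit. Unset Printing Implicit Defensive.
Import Order.TTheory GRing.Theory Num.Theory.
Local Open Scope ring_scope.

(* Vectors of V are column vectors 'cV[R]_m; endomorphisms are m x m matrices
   acting on the left; the inner product is g(u,v) = u^T *m G *m v. *)

Definition commx (R : pzRingType) (m : nat) (X Y : 'M[R]_m) : 'M[R]_m :=
  X *m Y - Y *m X.

Definition pseudo_hermitian (R : realFieldType) (m : nat) (G J : 'M[R]_m) : Prop :=
  [/\ J *m J = - 1%:M, G^T = G, G \in unitmx & J^T *m G *m J = G].

Definition hermitian_endo (R : realFieldType) (m : nat) (G J A : 'M[R]_m) : Prop :=
  A^T *m G = G *m A /\ A *m J = J *m A.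

Definition in_u (R : realFieldType) (m : nat) (G J X : 'M[R]_m) : Prop :=
  X *m J = J *m X /\ X^T *m G = - (G *m X).

Definition u_eigenvalue (R : realFieldType) (m : nat) (G J : 'M[R]_m)
  (R0 : 'M[R]_m -> 'M[R]_m) (mu : R) : Prop :=
  exists X : 'M[R]_m, [/\ in_u G J X, X != 0 & R0 X = mu *: X].

(* A has a non-trivial Jordan block (size >= 2) for the eigenvalue lam:
   ker (A - lam)^2 is strictly bigger than ker (A - lam). *)
Definition nontrivial_jordan_block (R : realFieldType) (m : nat)
  (A : 'M[R]_m) (lam : R) : Prop :=
  exists v : 'cV[R]_m,
    (A - lam%:M) *m ((A - lam%:M) *m v) = 0 /\ (A - lam%:M) *m v != 0.

(* Main.v *)
Require Import Defs.
From HB Require Import structures.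
From mathcomp Require Import all_boot all_order all_algebra.
From mathcomp.algebra_tactics Require Import ring.
Import Order.TTheory GRing.Theory Num.Theory.
Local Open Scope ring_scope.

Definition lin_of (K : fieldType) (aT rT : vectType K) (f : aT -> rT) (H : linear f) := f.
HB.instance Definition _ (K : fieldType) (aT rT : vectType K) (f : aT -> rT) (H : linear f) :=
  @GRing.isLinear.Build K aT rT *:%R (@lin_of _ _ _ f H) H.

Lemma linfunE' (K : fieldType) (aT rT : vectType K) (f : aT -> rT) (H : linear f) :
  linfun f =1 f.
Proof. move=> v. exact: (lfunE (@lin_of _ _ _ f H) v). Qed.

Lemma absL (K : fieldType) (vT : vectType K) (C : {vspace vT}) (T : vT -> vT) (mu : K) (z : vT) :
  (forall x, x \in C -> T x \in C) ->
  (forall a x y, x \in C -> y \in C -> T (a *: x + y) = a *: T x + T y) ->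
  z \in C ->
  (exists2 w, w \in C & (w != 0) && (T w == mu *: w)) \/ (exists2 w, w \in C & T w - mu *: w = z).
Proof.
move=> TC Tlin zC.
have lin : linear (fun x => T (projv C x) - mu *: projv C x).
  move=> a x y /=; rewrite linearP Tlin ?memv_proj // scalerDr scalerBr scalerA.
  by rewrite scalerA mulrC -scalerA opprD addrACA.
set g := linfun (fun x => T (projv C x) - mu *: projv C x).
have gC : forall x, x \in C -> g x = T x - mu *: x.
  by move=> x Cx; rewrite /g (@linfunE' _ _ _ _ lin) projv_id.
case: (eqVneq (C :&: lker g)%VS 0%VS) => H.
  right; have dimE := limg_dim_eq H.
  have sub : (g @: C <= C)%VS.
    by apply/subvP => _ /memv_imgP [x Cx ->]; rewrite gC // memvB ?memvZ ?TC.
  have /eqP E : (g @: C == C)%VS by rewrite eqEdim sub dimE leqnn.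
  have : z \in (g @: C)%VS by rewrite E.
  by case/memv_imgP => w Cw ->; exists w => //; rewrite gC.
left; exists (vpick (C :&: lker g)%VS).
  by have := memv_pick (C :&: lker g)%VS; rewrite memv_cap => /andP[].
rewrite vpick0 H /=.
have := memv_pick (C :&: lker g)%VS; rewrite memv_cap => /andP[Cw].
by rewrite memv_ker gC // subr_eq0.
Qed.

Lemma horner_comm (R : realFieldType) n (A M : 'M[R]_n.+1) p :
  A *m M = M *m A -> horner_mx A p *m M = M *m horner_mx A p.
Proof. move=> H; exact: (comm_horner_mx p H). Qed.

Lemma horner_step (R : realFieldType) n (A : 'M[R]_n.+1) q c :
  horner_mx A (q * 'X + c%:P) = horner_mx A q *m A + c%:M.
Proof. by rewrite rmorphD rmorphM /= horner_mx_X horner_mx_C mulmxE. Qed.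

Lemma horner_herm (R : realFieldType) n (G A : 'M[R]_n.+1) p :
  A^T *m G = G *m A -> (horner_mx A p)^T *m G = G *m horner_mx A p.
Proof.
move=> H; elim/poly_ind: p => [|q c IH].
  by rewrite rmorph0 trmx0 mul0mx mulmx0.
rewrite horner_step linearD /= trmx_mul tr_scalar_mx mulmxDl mulmxDr -mulmxA IH.
rewrite mulmxA H -!mulmxA; congr (_ + _); last by rewrite scalar_mxC.
by rewrite (@horner_comm _ _ A A q (erefl _)).
Qed.

Lemma horner_jordan (R : realFieldType) n (A : 'M[R]_n.+1) (l : R) p :
  forall v : 'cV[R]_n.+1, (A - l%:M) *m ((A - l%:M) *m v) = 0 ->
  horner_mx A p *m v = p.[l] *: v + (p^`()).[l] *: ((A - l%:M) *m v).
Proof.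
elim/poly_ind: p => [|q c IH] v Hv.
  by rewrite rmorph0 mul0mx deriv0 !horner0 !scale0r addr0.
have AvE : A *m v = l *: v + (A - l%:M) *m v.
  by rewrite mulmxBl mul_scalar_mx addrC subrK.
have HN : (A - l%:M) *m ((A - l%:M) *m ((A - l%:M) *m v)) = 0 by rewrite Hv mulmx0.
rewrite horner_step mulmxDl -mulmxA AvE mulmxDr -scalemxAr IH // IH //.
rewrite Hv scaler0 addr0 mul_scalar_mx derivMXaddC hornerMXaddC hornerD hornerMX.
rewrite !scalerDr !scalerA !scalerDl.
set N := (A - l%:M) *m v.
rewrite [l * _]mulrC [l * (q^`()).[l]]mulrC.
rewrite -!addrA; congr (_ + _); rewrite addrA [RHS]addrC; congr (_ + _); exact: addrC.
Qed.

Set Implicit Arguments. Unset Strict Implicit.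

Definition Ym (R : realFieldType) n (G : 'M[R]_n.+1) (a b : 'cV[R]_n.+1) : 'M[R]_n.+1 :=
  a *m (b^T *m G).

Lemma ac1 (V : zmodType) (p q r s : V) : - p - - q - - r - - - s = q - p - s - - r.
Proof. by rewrite !opprK [-p + q]addrC addrAC. Qed.
Lemma ac2 (V : zmodType) (x y z w : V) : x + y - z - w = - z - w - - x - - y.
Proof. by rewrite !opprK addrC addrA addrC !addrA. Qed.

Lemma YmDl (R : realFieldType) n (G : 'M[R]_n.+1) a1 a2 b : Ym G (a1 + a2) b = Ym G a1 b + Ym G a2 b.
Proof. by rewrite /Ym mulmxDl. Qed.
Lemma YmDr (R : realFieldType) n (G : 'M[R]_n.+1) a b1 b2 : Ym G a (b1 + b2) = Ym G a b1 + Ym G a b2.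
Proof. by rewrite /Ym linearD /= mulmxDl mulmxDr. Qed.
Lemma YmZl (R : realFieldType) n (G : 'M[R]_n.+1) (c : R) a b : Ym G (c *: a) b = c *: Ym G a b.
Proof. by rewrite /Ym scalemxAl. Qed.
Lemma YmZr (R : realFieldType) n (G : 'M[R]_n.+1) (c : R) a b : Ym G a (c *: b) = c *: Ym G a b.
Proof. by rewrite /Ym linearZ /= -scalemxAl -scalemxAr. Qed.
Lemma YmNl (R : realFieldType) n (G : 'M[R]_n.+1) a b : Ym G (- a) b = - Ym G a b.
Proof. by rewrite -scaleN1r YmZl scaleN1r. Qed.
Lemma YmNr (R : realFieldType) n (G : 'M[R]_n.+1) a b : Ym G a (- b) = - Ym G a b.
Proof. by rewrite -scaleN1r YmZr scaleN1r. Qed.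
Lemma Ym0l (R : realFieldType) n (G : 'M[R]_n.+1) b : Ym G 0 b = 0.
Proof. by rewrite /Ym mul0mx. Qed.
Lemma Ym0r (R : realFieldType) n (G : 'M[R]_n.+1) a : Ym G a 0 = 0.
Proof. by rewrite /Ym trmx0 mul0mx mulmx0. Qed.
Lemma Ym_mull (R : realFieldType) n (G M : 'M[R]_n.+1) a b : M *m Ym G a b = Ym G (M *m a) b.
Proof. by rewrite /Ym mulmxA. Qed.
Lemma Ym_mulr (R : realFieldType) n (G M : 'M[R]_n.+1) a b :
  M^T *m G = G *m M -> Ym G a b *m M = Ym G a (M *m b).
Proof. by move=> H; rewrite /Ym -!mulmxA -H trmx_mul !mulmxA. Qed.
Lemma Ym_tr (R : realFieldType) n (G : 'M[R]_n.+1) a b :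
  G^T = G -> (Ym G a b)^T *m G = G *m Ym G b a.
Proof. by move=> H; rewrite /Ym !trmx_mul trmxK H !mulmxA. Qed.
Lemma Ym_J (R : realFieldType) n (G J : 'M[R]_n.+1) a b :
  J *m J = - 1%:M -> J^T *m G *m J = G -> Ym G a b *m J = - Ym G a (J *m b).
Proof.
move=> JJ JG.
have E : G *m J = - (J^T *m G).
  by rewrite -{1}JG -mulmxA JJ mulmxN mulmx1.
by rewrite /Ym -!mulmxA E trmx_mul !mulmxN !mulmxA.
Qed.

Lemma commxD (R : realFieldType) n (X Y M : 'M[R]_n.+1) : commx (X + Y) M = commx X M + commx Y M.
Proof. by rewrite /commx mulmxDl mulmxDr opprD addrACA. Qed.
Lemma commxN (R : realFieldType) n (X M : 'M[R]_n.+1) : commx (- X) M = - commx X M.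
Proof. by rewrite /commx mulNmx mulmxN opprB opprK addrC. Qed.
Lemma commxB (R : realFieldType) n (X Y M : 'M[R]_n.+1) : commx (X - Y) M = commx X M - commx Y M.
Proof. by rewrite commxD commxN. Qed.
Lemma commxZ (R : realFieldType) n (c : R) (X M : 'M[R]_n.+1) : commx (c *: X) M = c *: commx X M.
Proof. by rewrite /commx -scalemxAl -scalemxAr scalerBr. Qed.

Lemma commx_Y (R : realFieldType) n (G M : 'M[R]_n.+1) a b :
  M^T *m G = G *m M -> commx (Ym G a b) M = Ym G a (M *m b) - Ym G (M *m a) b.
Proof. by move=> H; rewrite /commx Ym_mulr // Ym_mull. Qed.

Definition Xm (R : realFieldType) n (G J : 'M[R]_n.+1) (a b : 'cV[R]_n.+1) : 'M[R]_n.+1 :=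
  Ym G a b + Ym G (J *m a) (J *m b) - Ym G b a - Ym G (J *m b) (J *m a).

Lemma Xm_u (R : realFieldType) n (G J : 'M[R]_n.+1) a b :
  pseudo_hermitian G J -> in_u G J (Xm G J a b).
Proof.
case=> JJ Gs _ JG; split.
  rewrite /Xm !mulmxDl !mulmxDr !mulNmx !mulmxN !Ym_J // !Ym_mull.
  rewrite !mulmxA JJ !mulNmx !mul1mx !YmNl !YmNr.
  exact: ac1.
rewrite /Xm !linearD !linearN /= !mulmxDl !mulNmx !Ym_tr //.
exact: ac2.
Qed.

Lemma colrow_eq (R : realFieldType) n (x z : 'cV[R]_n.+1) (c d : 'rV[R]_n.+1) i :
  x *m c + z *m d = 0 -> c 0 i *: x + d 0 i *: z = 0.
Proof.
move=> H; apply/colP => j; have := congr1 (fun M : 'M_n.+1 => M j i) H.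
by rewrite !mxE !big_ord1 [c 0 i * _]mulrC [d 0 i * _]mulrC.
Qed.

Lemma Ykey (R : realFieldType) n (G J : 'M[R]_n.+1) (x y : 'cV[R]_n.+1) :
  J *m J = - 1%:M -> G \in unitmx -> x != 0 ->
  Ym G x y + Ym G (J *m x) (J *m y) = 0 -> y = 0.
Proof.
move=> JJ Gu xn0 H.
set c := y^T *m G; set d := (J *m y)^T *m G.
have cE : c = 0.
  apply/rowP => i; rewrite [in RHS]mxE.
  set s := c 0 i; set t := d 0 i.
  set Jx := J *m x.
  have E1 : s *: x + t *: Jx = 0.
    by apply: colrow_eq; rewrite /Ym -/c -/d -/Jx in H.
  have E2 : s *: Jx - t *: x = 0.
    have := congr1 (mulmx J) E1.
    by rewrite mulmx0 mulmxDr -!scalemxAr /Jx mulmxA JJ mulNmx mul1mx scalerN.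
  have E3 : (s * s + t * t) *: x = 0.
    have -> : (s * s + t * t) *: x = s *: (s *: x + t *: Jx) - t *: (s *: Jx - t *: x).
      rewrite scalerDr scalerBr !scalerA scalerDl opprB [t * s]mulrC.
      by rewrite addrA (addrAC ((s * s) *: x)) addrK.
    by rewrite E1 E2 !scaler0 subr0.
  move/eqP: E3; rewrite scaler_eq0 (negbTE xn0) orbF -!expr2.
  by rewrite paddr_eq0 ?sqr_ge0 // sqrf_eq0 => /andP[/eqP].
apply: trmx_inj; rewrite trmx0.
by rewrite -(mulmxK Gu y^T) -/c cE mul0mx.
Qed.

Definition fC (R : realFieldType) n (G J A : 'M[R]_n.+1) (X : 'M[R]_n.+1) :
  'M[R]_n.+1 * 'M[R]_n.+1 * 'M[R]_n.+1 :=
  (X *m J - J *m X, X^T *m G + G *m X, commx X A).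

Lemma fC_lin (R : realFieldType) n (G J A : 'M[R]_n.+1) : linear (fC G J A).
Proof.
move=> a X Y; rewrite /fC /commx /=.
congr (_, _, _).
- by rewrite mulmxDl mulmxDr -scalemxAl -scalemxAr opprD addrACA -scalerBr.
- by rewrite linearD linearZ /= mulmxDl mulmxDr -scalemxAl -scalemxAr addrACA scalerDr.
- by rewrite mulmxDl mulmxDr -scalemxAl -scalemxAr opprD addrACA -scalerBr.
Qed.

Lemma in_u_lin (R : realFieldType) n (G J : 'M[R]_n.+1) (a : R) X Y :
  in_u G J X -> in_u G J Y -> in_u G J (a *: X + Y).
Proof.
move=> [X1 X2] [Y1 Y2]; split.
  by rewrite mulmxDl mulmxDr -scalemxAl -scalemxAr X1 Y1.
by rewrite linearD linearZ /= mulmxDl mulmxDr -scalemxAl -scalemxAr X2 Y2 scalerN opprD.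
Qed.

Lemma memCC (R : realFieldType) n (G J A : 'M[R]_n.+1) X :
  X \in lker (linfun (fC G J A)) <-> in_u G J X /\ commx X A = 0.
Proof.
rewrite memv_ker (@linfunE' _ _ _ _ (@fC_lin R n G J A)) /fC.
split.
  move/eqP => [] /eqP; rewrite subr_eq0 => /eqP H1 /eqP; rewrite addr_eq0 => /eqP H2 H3.
  by [].
move=> [[H1 H2] H3]; apply/eqP; rewrite H1 H2 H3 subrr addNr //.
Qed.

Lemma mainL (R : realFieldType) n (G J A : 'M[R]_n.+1) (p : {poly R})
  (R0 : 'M[R]_n.+1 -> 'M[R]_n.+1) (X0 : 'M[R]_n.+1) (mu : R) :
  (forall X, in_u G J X -> in_u G J (R0 X)) ->
  (forall (a : R) X Y, in_u G J X -> in_u G J Y ->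
     R0 (a *: X + Y) = a *: R0 X + R0 Y) ->
  (forall X, in_u G J X -> commx (R0 X) A = commx X (horner_mx A p)) ->
  in_u G J X0 -> commx X0 A != 0 ->
  commx X0 (horner_mx A p) = mu *: commx X0 A ->
  u_eigenvalue G J R0 mu.
Proof.
move=> Ru Rlin Rc X0u X0n X0c.
set CC := lker (linfun (fC G J A)).
have CCu : forall X, X \in CC -> in_u G J X by move=> X /memCC [].
have R0C : forall X, X \in CC -> R0 X \in CC.
  move=> X /memCC [Xu XA]; apply/memCC; split; first exact: Ru.
  rewrite Rc // /commx.
  move/eqP: XA; rewrite subr_eq0 => /eqP XA.
  by rewrite (@horner_comm _ _ A X p (esym XA)) subrr.
have Zu : in_u G J (R0 X0 - mu *: X0).
  by rewrite addrC -scaleNr; apply: in_u_lin => //; apply: Ru.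
have ZC : R0 X0 - mu *: X0 \in CC.
  apply/memCC; split => //.
  by rewrite commxB commxZ Rc // X0c subrr.
have Rl : forall a x y, x \in CC -> y \in CC -> R0 (a *: x + y) = a *: R0 x + R0 y.
  by move=> a x y /CCu xu /CCu yu; apply: Rlin.
case: (@absL _ _ CC R0 mu _ R0C Rl ZC).
  case=> w /CCu wu /andP[wn0 /eqP wE]; exists w; split => //.
case=> w /memCC [wu wA] wE; exists (X0 - w); split.
- by rewrite addrC -scaleN1r; apply: in_u_lin.
- apply/negP => /eqP E; move: X0n.
  by rewrite -(subrK w X0) E add0r wA eqxx.
- rewrite addrC -scaleN1r Rlin // scaleN1r.
  have -> : R0 X0 = R0 w - mu *: w + mu *: X0 by rewrite wE subrK.
  by rewrite scaleN1r addrA addKr scalerDr scalerN.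
Qed.

Lemma right_eig (R : realFieldType) n (G A : 'M[R]_n.+1) (l : R) :
  G \in unitmx -> A^T *m G = G *m A -> eigenvalue A l ->
  exists2 u : 'cV[R]_n.+1, A *m u = l *: u & u != 0.
Proof.
move=> Gu H /eigenvalueP [r rA rn0].
have E : A *m invmx G = invmx G *m A^T.
  by rewrite -{1}(mulKmx Gu A) -H -mulmxA mulmxK.
exists (invmx G *m r^T).
  by rewrite mulmxA E -mulmxA -trmx_mul rA linearZ /= scalemxAr.
apply/negP => /eqP E0; move/negP: rn0; apply; apply/eqP.
apply: trmx_inj; rewrite trmx0.
by rewrite -(mulKVmx Gu r^T) E0 mulmx0.
Qed.

Lemma horner_eig (R : realFieldType) n (A : 'M[R]_n.+1) (l : R) p (u : 'cV[R]_n.+1) :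
  A *m u = l *: u -> horner_mx A p *m u = p.[l] *: u.
Proof.
move=> H.
have N0 : (A - l%:M) *m u = 0 by rewrite mulmxBl H mul_scalar_mx subrr.
by rewrite (@horner_jordan _ _ A l p u) ?N0 ?mulmx0 // scaler0 addr0.
Qed.

Lemma commx_Y_eig (R : realFieldType) n (G M : 'M[R]_n.+1) a b (al be : R) :
  M^T *m G = G *m M -> M *m a = al *: a -> M *m b = be *: b ->
  commx (Ym G a b) M = (be - al) *: Ym G a b.
Proof.
by move=> H Ha Hb; rewrite commx_Y // Ha Hb YmZl YmZr scalerBl.
Qed.

Lemma commx_X_eig (R : realFieldType) n (G J M : 'M[R]_n.+1) a b (al be : R) :
  M^T *m G = G *m M -> M *m a = al *: a -> M *m b = be *: b ->
  M *m (J *m a) = al *: (J *m a) -> M *m (J *m b) = be *: (J *m b) ->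
  commx (Xm G J a b) M = (be - al) *: (Ym G a b + Ym G (J *m a) (J *m b)
     + Ym G b a + Ym G (J *m b) (J *m a)).
Proof.
move=> H Ha Hb HJa HJb.
rewrite /Xm !commxB commxD (commx_Y_eig H Ha Hb) (commx_Y_eig H HJa HJb) (commx_Y_eig H Hb Ha) (commx_Y_eig H HJb HJa).
by rewrite -[al - be]opprB !scaleNr !opprK !scalerDr.
Qed.

Lemma commx_Y_jord (R : realFieldType) n (G M N : 'M[R]_n.+1) a b (al be : R) :
  M^T *m G = G *m M -> M *m a = al *: a + be *: (N *m a) ->
  M *m b = al *: b + be *: (N *m b) ->
  commx (Ym G a b) M = be *: (Ym G a (N *m b) - Ym G (N *m a) b).
Proof.
move=> H Ha Hb; rewrite commx_Y // Ha Hb YmDl YmDr !YmZl !YmZr.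
by rewrite opprD addrACA subrr add0r scalerBr.
Qed.

Definition Wm (R : realFieldType) n (G J N : 'M[R]_n.+1) (a b : 'cV[R]_n.+1) :=
  (Ym G a (N *m b) - Ym G (N *m a) b)
  + (Ym G (J *m a) (N *m (J *m b)) - Ym G (N *m (J *m a)) (J *m b))
  - (Ym G b (N *m a) - Ym G (N *m b) a)
  - (Ym G (J *m b) (N *m (J *m a)) - Ym G (N *m (J *m b)) (J *m a)).

Lemma commx_X_jord (R : realFieldType) n (G J M N : 'M[R]_n.+1) a b (al be : R) :
  M^T *m G = G *m M ->
  (forall x, x \in [:: a; b; J *m a; J *m b] -> M *m x = al *: x + be *: (N *m x)) ->
  commx (Xm G J a b) M = be *: Wm G J N a b.
Proof.
move=> H Hx.
have Ha := Hx a; have Hb := Hx b; have HJa := Hx (J *m a); have HJb := Hx (J *m b).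
rewrite !inE !eqxx ?orbT in Ha Hb HJa HJb.
rewrite /Xm /Wm !commxB commxD (commx_Y_jord H (Ha isT) (Hb isT))
  (commx_Y_jord H (HJa isT) (HJb isT)) (commx_Y_jord H (Hb isT) (Ha isT))
  (commx_Y_jord H (HJb isT) (HJa isT)).
by rewrite !scalerDr !scalerN !scalerBr.
Qed.

Lemma shift_eig (R : realFieldType) n (A : 'M[R]_n.+1) (x : 'cV[R]_n.+1) (al c : R) :
  A *m x = al *: x -> (A - c%:M) *m x = (al - c) *: x.
Proof. by move=> H; rewrite mulmxBl H mul_scalar_mx scalerBl. Qed.

Theorem propositionA3 (R : realFieldType) (n : nat) (G J A : 'M[R]_n.+1)
  (p : {poly R}) (R0 : 'M[R]_n.+1 -> 'M[R]_n.+1) :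
  pseudo_hermitian G J ->
  hermitian_endo G J A ->
  (* R0 restricts to a linear operator u(g,J) -> u(g,J) *)
  (forall X, in_u G J X -> in_u G J (R0 X)) ->
  (forall (a : R) X Y, in_u G J X -> in_u G J Y ->
     R0 (a *: X + Y) = a *: R0 X + R0 Y) ->
  (forall X, in_u G J X -> commx (R0 X) A = commx X (horner_mx A p)) ->
  (forall li lj : R, eigenvalue A li -> eigenvalue A lj -> li != lj ->
     u_eigenvalue G J R0 ((p.[li] - p.[lj]) / (li - lj)))
  /\
  (forall li : R, eigenvalue A li -> nontrivial_jordan_block A li ->
     u_eigenvalue G J R0 (p^`()).[li]).
Proof.
move=> PH Herm Ru Rlin Rc.
have [JJ Gs Gu JG] := PH; have [AG AJ] := Herm.
have BG : (horner_mx A p)^T *m G = G *m horner_mx A p := @horner_herm _ _ G A p AG.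
have JA : forall x : 'cV[R]_n.+1, A *m (J *m x) = J *m (A *m x).
  by move=> x; rewrite !mulmxA AJ.
split.
- move=> li lj Hi Hj nij.
  have [u Au un0] := right_eig Gu AG Hi; have [v Av vn0] := right_eig Gu AG Hj.
  have AJu : A *m (J *m u) = li *: (J *m u) by rewrite JA Au scalemxAr.
  have AJv : A *m (J *m v) = lj *: (J *m v) by rewrite JA Av scalemxAr.
  have Bu := @horner_eig _ _ A li p _ Au.
  have Bv := @horner_eig _ _ A lj p _ Av.
  have BJu := @horner_eig _ _ A li p _ AJu.
  have BJv := @horner_eig _ _ A lj p _ AJv.
  apply: (@mainL _ _ G J A p R0 (Xm G J u v) _ Ru Rlin Rc (Xm_u u v PH)).
  + rewrite (commx_X_eig AG Au Av AJu AJv) scaler_eq0 negb_or subr_eq0 eq_sym nij /=.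
    apply/negP => /eqP S0; have := congr1 (mulmx (A - lj%:M)) S0.
    rewrite mulmx0 !mulmxDr !Ym_mull (shift_eig lj Au) (shift_eig lj Av)
      (shift_eig lj AJu) (shift_eig lj AJv) subrr !scale0r !Ym0l !addr0 !YmZl -scalerDr.
    move/eqP; rewrite scaler_eq0 subr_eq0 (negbTE nij) /= => /eqP /(Ykey JJ Gu un0) v0.
    by rewrite v0 eqxx in vn0.
  + rewrite (commx_X_eig BG Bu Bv BJu BJv) (commx_X_eig AG Au Av AJu AJv) scalerA.
    congr (_ *: _); field.
    by rewrite subr_eq0.
- move=> li _ [v [Hv Nvn0]].
  set N := A - li%:M in Hv Nvn0.
  set u := N *m v in Hv Nvn0.
  have NJ : forall x : 'cV[R]_n.+1, N *m (J *m x) = J *m (N *m x).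
    by move=> x; rewrite /N !mulmxBl JA !mul_scalar_mx scalemxAr mulmxBr.
  have Nu : N *m u = 0 by [].
  have HA : forall x, x \in [:: u; v; J *m u; J *m v] ->
      A *m x = li *: x + 1 *: (N *m x).
    by move=> x _; rewrite scale1r /N mulmxBl mul_scalar_mx addrC subrK.
  have HB : forall x, x \in [:: u; v; J *m u; J *m v] ->
      horner_mx A p *m x = p.[li] *: x + (p^`()).[li] *: (N *m x).
    move=> x; rewrite !inE => /or4P [] /eqP ->; apply: horner_jordan.
    - by rewrite -/N Nu mulmx0.
    - by [].
    - by rewrite -/N !NJ Nu mulmx0 mulmx0.
    - by rewrite -/N !NJ Hv mulmx0.
  apply: (@mainL _ _ G J A p R0 (Xm G J u v) _ Ru Rlin Rc (Xm_u u v PH)).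
  + rewrite (commx_X_jord AG HA) scale1r.
    rewrite /Wm !NJ Nu !mulmx0 -/u !Ym0l !Ym0r !subr0 !sub0r !opprK -addrA.
    apply/negP; rewrite -mulr2n -scaler_nat scaler_eq0 pnatr_eq0 /=.
    by move/eqP/(Ykey JJ Gu Nvn0) => u0; rewrite u0 eqxx in Nvn0.
  + by rewrite (commx_X_jord BG HB) (commx_X_jord AG HA) scale1r.
Qed.
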